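(* Let $\mathcal{D}$ be a finite domain of search histories with $|\mathcal{D}|\ge 2$ and $U\ge 1$. Algorithm $\hat{\mathcal{A}}$ is $(\epsilon',1/(|\mathcal{D}|-1))$-indistinguishable for all $\epsilon'>0$, but it is not $(\epsilon,\delta)$-probabilistic differentially private for any $\epsilon$ and any $\delta<1$.
   Context: A search log is an element $S=(S_1,\dots,S_U)\in\mathcal{D}^U$, where $S_i$ is user $i$'s search history; two search logs are neighboring if they differ in exactly one user's history. Algorithm $\hat{\mathcal{A}}$, on input $S$, samples uniformly at random an element of $\mathcal{D}\setminus\{S_1\}$ and returns it. An algorithm $\mathcal{A}$ with output space $\Omega$ is $(\epsilon,\delta)$-indistinguishable if for all neighboring $S,S'$ and all $\mathcal{O}\subseteq\Omega$: $\Pr[\mathcal{A}(S)\in\mathcal{O}]\le e^{\epsilon}\Pr[\mathcal{A}(S')\in\mathcal{O}]+\delta$. $\mathcal{A}$ is $(\epsilon,\delta)$-probabilistic differentially private if for every search log $S$ the output space $\Omega$ can be partitioned into $\Omega_1,\Omega_2$ with (1) $\Pr[\mathcal{A}(S)\in\Omega_2]\le\delta$ and (2) for all neighboring $S'$ and all $O\in\Omega_1$: $e^{-\epsilon}\Pr[\mathcal{A}(S')=O]\le\Pr[\mathcal{A}(S)=O]\le e^{\epsilon}\Pr[\mathcal{A}(S')=O]$. *)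

(* Defs.v *)
From HB Require Import structures.
From mathcomp Require Import all_boot all_order all_algebra.
From mathcomp Require Import reals.
From mathcomp Require Import sequences exp.
Set Implicit Arguments. Unset Strict Implicit. Unset Printing Implicit Defensive.
Import Order.TTheory GRing.Theory Num.Theory.
Local Open Scope ring_scope.

(* A search log: the histories S_1..S_U of U users, each in domain D.
   User i (1-based in the paper) is index i-1 : 'I_U. *)
Definition search_log (D : finType) (U : nat) := {ffun 'I_U -> D}.

Definition neighboring (D : finType) (U : nat) (S S' : search_log D U) : Prop :=
  #|[set i | S i != S' i]| = 1%N.

(* A (randomized) algorithm on search logs with finite output space Omega is
   given by its output distribution: A S o = Pr[A(S) = o]. *)
Definition algorithm (R : realType) (D : finType) (U : nat) (Omega : finType) :=
  search_log D U -> {ffun Omega -> R}.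

Definition prob (R : realType) (Omega : finType) (p : {ffun Omega -> R})
  (O : {set Omega}) : R := \sum_(o in O) p o.

Definition indistinguishable (R : realType) (D : finType) (U : nat)
  (Omega : finType) (eps delta : R) (A : algorithm R D U Omega) : Prop :=
  forall S S' : search_log D U, neighboring S S' ->
  forall O : {set Omega},
    prob (A S) O <= expR eps * prob (A S') O + delta.

Definition probabilistic_dp (R : realType) (D : finType) (U : nat)
  (Omega : finType) (eps delta : R) (A : algorithm R D U Omega) : Prop :=
  forall S : search_log D U,
  exists Omega1 Omega2 : {set Omega},
    [/\ Omega1 :|: Omega2 = setT, Omega1 :&: Omega2 = set0,
        prob (A S) Omega2 <= delta &
        forall S' : search_log D U, neighboring S S' ->
        forall o, o \in Omega1 ->
          expR (- eps) * A S' o <= A S o /\ A S o <= expR eps * A S' o].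

(* Algorithm A-hat: output a uniformly random element of D \ {S_1}.
   Requires U >= 1 so that user 1 exists. *)
Definition Ahat (R : realType) (D : finType) (U : nat) (hU : (0 < U)%N)
  : algorithm R D U D :=
  fun S => [ffun o => if o == S (Ordinal hU) then 0
                      else ((#|D| - 1)%N%:R)^-1].

(* Main.v *)
Require Import Defs.
From HB Require Import structures.
From mathcomp Require Import all_boot all_order all_algebra.
From mathcomp Require Import reals.
From mathcomp Require Import sequences exp.
From mathcomp Require Import lra.
Import Order.TTheory GRing.Theory Num.Theory.
Local Open Scope ring_scope.

Theorem corollary13 (R : realType) (D : finType) (U : nat)
  (hD : (2 <= #|D|)%N) (hU : (0 < U)%N) :
  (forall eps' : R, 0 < eps' ->
     indistinguishable eps' ((#|D| - 1)%N%:R)^-1 (@Ahat R D U hU))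
  /\
  (forall eps delta : R, delta < 1 ->
     ~ probabilistic_dp eps delta (@Ahat R D U hU)).
Proof.
set p : R := ((#|D| - 1)%N%:R)^-1.
have p0 : 0 < p by rewrite /p invr_gt0 ltr0n subn_gt0.
set i0 := Ordinal hU.
split.
  move=> e e0 S S' _ O; rewrite /prob.
  set h := fun o : D => if o == S' i0 then p else 0.
  have step : \sum_(o in O) Ahat R hU S o <=
     \sum_(o in O) Ahat R hU S' o + \sum_(o in O) h o.
    rewrite -big_split /=; apply: ler_sum => o _.
    rewrite /Ahat !ffunE /h; case: eqP => _; case: eqP => _;
      rewrite ?addr0 ?add0r ?lexx ?(ltW p0) ?lerDl ?(ltW p0) //.
  have hsum : \sum_(o in O) h o <= p.
    have -> : p = \sum_o h o.
      rewrite /h -big_mkcond /= big_pred1_eq //.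
    rewrite [X in _ <= X](bigID (fun o => o \in O)) /= lerDl.
    by apply: sumr_ge0 => o _; rewrite /h; case: eqP => _ //; rewrite ltW.
  apply: (le_trans step); apply: lerD => //.
  have ge0 : 0 <= \sum_(o in O) Ahat R hU S' o.
    by apply: sumr_ge0 => o _; rewrite /Ahat ffunE; case: eqP => _ //; rewrite ltW.
  rewrite -[X in X <= _]mul1r; apply: ler_wpM2r => //.
  by rewrite -expR0 ler_expR ltW.
move=> e d d1 Hdp.
have /card_gt0P [d0 _] : (0 < #|D|)%N by apply: leq_trans hD.
set S : search_log D U := [ffun _ => d0].
have [O1 [O2 [HU HI H2 H1]]] := Hdp S.
have tot : prob (Ahat R hU S) setT = 1.
  rewrite /prob (bigD1 (S i0)) //= {1}/Ahat ffunE eqxx add0r.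
  rewrite (eq_bigr (fun _ => p)); last first.
    by move=> o /andP[_ /negbTE Ho]; rewrite /Ahat ffunE Ho.
  rewrite sumr_const.
  have -> : #|[pred o in setT | o != S i0]| = (#|D| - 1)%N.
    rewrite subn1 -(cardC1 (S i0)); apply: eq_card => o; by rewrite !inE.
  rewrite -mulr_natr /p mulVf // pnatr_eq0 -lt0n subn_gt0 //.
have Hsplit : prob (Ahat R hU S) setT =
    prob (Ahat R hU S) O1 + prob (Ahat R hU S) O2.
  rewrite -HU /prob -bigU /=; last by rewrite -setI_eq0 HI.
  by apply: eq_bigl => o; rewrite !inE.
have pos : 0 < prob (Ahat R hU S) O1.
  move: Hsplit; rewrite tot => E; lra.
have [o Ho1 Hne] : exists2 o, o \in O1 & Ahat R hU S o != 0.
  have : [exists o in O1, Ahat R hU S o != 0].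
    apply: contraT => /exists_inPn H.
    move: pos; rewrite /prob big1 ?ltxx // => o Ho.
    by have /negPn/eqP := H o Ho.
  by move/exists_inP.
have oS : o != S i0.
  by apply: contra Hne => /eqP ->; rewrite /Ahat ffunE eqxx.
set S' : search_log D U := [ffun i => if i == i0 then o else S i].
have nb : neighboring S S'.
  rewrite /neighboring -(cards1 i0); congr (#|pred_of_set _|); apply/setP => i.
  rewrite !inE /S' !ffunE; case: (i == i0); rewrite ?eqxx //.
  by move: oS; rewrite /S !ffunE eq_sym.
have [_ ] := H1 S' nb o Ho1.
have E : (Ordinal hU == i0) = true := eqxx _.
rewrite /Ahat /S' !ffunE E (eqxx o) mulr0.
move: Hne; rewrite /Ahat !ffunE; case: ifP => _; first by rewrite (eqxx (0:R)).
move=> _ hle; move: (lt_le_trans p0 hle); by rewrite ltxx.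
Qed.
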